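(* Let $S$ be a nonempty set of graphs on $\Pi$. Then for every integer $i$ with $1\le i<\mathrm{eqdom}(S)$, $(i+(n-\mathrm{cov}_i(S)))$-set agreement is solvable in one round on the closed-above model generated by $\mathrm{Sym}(S)$.
   Context: Fix a set of $n$ processes $\Pi=\{p_1,\dots,p_n\}$. A graph is a directed graph with vertex set $\Pi$; every graph is assumed to contain all self-loops $(p,p)$. For a graph $G$ and $p\in\Pi$, $Out_G(p)=\{q:(p,q)\in E(G)\}$ and $In_G(p)=\{q:(q,p)\in E(G)\}$; for $P\subseteq\Pi$, $Out_G(P)=\bigcup_{p\in P}Out_G(p)$. Computation proceeds in failure-free, communication-closed rounds: in each round $r$ a graph $G_r$ is chosen and each process $p$ receives in round $r$ exactly the round-$r$ messages of the processes in $In_{G_r}(p)$. A communication model is a set of infinite sequences of graphs; an execution is allowed iff its sequence of round graphs belongs to the model. For a graph $G$, $\uparrow G=\{H: E(H)\supseteq E(G)\}$. The closed-above model generated by a set $S$ of graphs is $(\bigcup_{G\in S}\uparrow G)^\omega$. $\mathrm{Sym}(S)=\{\pi(G): G\in S,\ \pi \text{ a permutation of }\Pi\}$, where $\pi(G)$ has edges $\{(\pi(u),\pi(v)):(u,v)\in E(G)\}$. In $k$-set agreement each process starts with an input from a totally ordered set $V_{in}$ and must decide a value so that every decided value is the input of some process and at most $k$ distinct values are decided; it is solvable in $r$ rounds on a model if some algorithm guarantees this, with all processes deciding after $r$ rounds, in every allowed execution and for every input assignment. $\mathrm{eqdom}(G)=\min\{i\in[1,n]: \forall P\subseteq\Pi,\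 |P|=i\Rightarrow Out_G(P)=\Pi\}$, $\mathrm{eqdom}(S)=\max_{G\in S}\mathrm{eqdom}(G)$, $\mathrm{cov}_i(G)=\min_{P\subseteq\Pi,|P|=i}|Out_G(P)|$ and $\mathrm{cov}_i(S)=\min_{G\in S}\mathrm{cov}_i(G)$. *)

(* Defs.v *)
From HB Require Import structures.
From mathcomp Require Import all_boot all_order.
From mathcomp Require Import fingroup perm.
Set Implicit Arguments. Unset Strict Implicit. Unset Printing Implicit Defensive.

Definition graph (n : nat) := {set ('I_n * 'I_n)}.

Definition has_loops n (G : graph n) : Prop := forall p : 'I_n, (p, p) \in G.

Definition Out n (G : graph n) (p : 'I_n) : {set 'I_n} := [set q | (p, q) \in G].
Definition In n (G : graph n) (p : 'I_n) : {set 'I_n} := [set q | (q, p) \in G].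
Definition OutS n (G : graph n) (P : {set 'I_n}) : {set 'I_n} :=
  \bigcup_(p in P) Out G p.

Definition upG n (G : graph n) : {set graph n} := [set H : {set ('I_n * 'I_n)} | G \subset H].

Definition permG n (pi : {perm 'I_n}) (G : graph n) : graph n :=
  [set (pi e.1, pi e.2) | e in G].

Definition SymG n (S : {set graph n}) : {set graph n} :=
  \bigcup_(pi : {perm 'I_n}) [set permG pi G | G in S].

Definition closed_above_model n (S : {set graph n}) : (nat -> graph n) -> Prop :=
  fun sigma => forall r, exists2 G, G \in S & sigma r \in upG G.

(* eqdom(G) = min { i in [1,n] | forall P, |P| = i -> Out_G(P) = Pi }
   (the min is taken with default n; n always satisfies the condition
    for graphs with self-loops) *)
Definition eqdom_cond n (G : graph n) (i : nat) : bool :=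
  [forall P : {set 'I_n}, (#|P| == i) ==> (OutS G P == [set: 'I_n])].

Definition eqdomG n (G : graph n) : nat :=
  \big[minn/n]_(1 <= i < n.+1 | eqdom_cond G i) i.

Definition eqdom n (S : {set graph n}) : nat := \max_(G in S) eqdomG G.

(* cov_i(G) = min_{|P| = i} |Out_G(P)|  (all values are <= n) *)
Definition covG n (i : nat) (G : graph n) : nat :=
  \big[minn/n]_(P : {set 'I_n} | #|P| == i) #|OutS G P|.

Definition cov n (i : nat) (S : {set graph n}) : nat :=
  \big[minn/n]_(G in S) covG i G.

Definition kset_solvable_1round n (d : Order.disp_t) (Vin : orderType d)
    (model : (nat -> graph n) -> Prop) (k : nat) : Prop :=
  exists (M : Type) (msg : 'I_n -> Vin -> M)
         (dec : 'I_n -> Vin -> ('I_n -> option M) -> Vin),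
  forall sigma, model sigma ->
  forall inp : 'I_n -> Vin,
    let rcv p := fun q => if q \in In (sigma 0%N) p then Some (msg q (inp q)) else None in
    let decision p := dec p (inp p) (rcv p) in
    (forall p, exists q, decision p = inp q) /\
    size (undup [seq decision p | p <- enum 'I_n]) <= k.

(* Main.v *)
Require Import Defs.
From HB Require Import structures.
From mathcomp Require Import all_boot all_order.
From mathcomp Require Import fingroup perm.

Set Implicit Arguments. Unset Strict Implicit. Unset Printing Implicit Defensive.
Import Order.TTheory.

Section Aux.
Variables (d : Order.disp_t) (Vin : orderType d) (M : eqType).

Definition fmin (rcv : M -> option Vin) (x : Vin) (l : seq M) : Vin :=
  foldr (fun q acc => if rcv q is Some v then Order.min v acc else acc) x l.

Lemma fmin_in rcv x l : fmin rcv x l = x \/ exists q, rcv q = Some (fmin rcv x l).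
Proof.
elim: l => [|q l IH] /=; first by left.
rewrite /fmin /=; rewrite -/(fmin rcv x l).
case E: (rcv q) => [v|] //.
rewrite minEle; case: ifP => _; first by right; exists q.
by [].
Qed.

Lemma fmin_le rcv x l q v : q \in l -> rcv q = Some v -> (fmin rcv x l <= v)%O.
Proof.
elim: l => [|q' l IH] //; rewrite in_cons => /orP [/eqP ->|Hin] E; rewrite /fmin /= -/(fmin rcv x l).
  by rewrite E ge_min lexx.
have := IH Hin E; case: (rcv q') => [w|] // H.
by rewrite ge_min H orbT.
Qed.
End Aux.

Lemma bigmin_leq (I : eqType) (r : seq I) (P : pred I) (F : I -> nat) x j :
  j \in r -> P j -> \big[minn/x]_(i <- r | P i) F i <= F j.
Proof.
elim: r => [|a r IH] //; rewrite in_cons big_cons => /orP [/eqP <-|Hj] Pj.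
  by rewrite Pj geq_minl.
case: ifP => _; last exact: IH.
by rewrite geq_min IH ?orbT.
Qed.

Lemma bigmin_leqx (I : Type) (r : seq I) (P : pred I) (F : I -> nat) x :
  \big[minn/x]_(i <- r | P i) F i <= x.
Proof.
elim: r => [|a r IH]; first by rewrite big_nil.
rewrite big_cons; case: ifP => _ //.
by rewrite geq_min IH orbT.
Qed.

Lemma exP n d (Vin : orderType d) (inp : 'I_n -> Vin) i : i <= n ->
  exists P : {set 'I_n}, #|P| = i /\
    forall p q, p \in P -> q \notin P -> (inp p <= inp q)%O.
Proof.
move=> Hi.
pose r := fun p q : 'I_n => (inp p <= inp q)%O.
have tot : total r by move=> p q; rewrite /r le_total.
have tr : transitive r by move=> a b c; rewrite /r; apply: le_trans.
pose s := sort r (enum 'I_n).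
have ps : perm_eq s (enum 'I_n) by rewrite perm_sort.
have us : uniq s by rewrite (perm_uniq ps) enum_uniq.
have ss : size s = n by rewrite (perm_size ps) size_enum_ord.
have pw : pairwise r s by rewrite -sorted_pairwise // sort_sorted.
exists [set x in take i s]; split.
  rewrite cardsE; move: (take_uniq i us) => /card_uniqP ->.
  by rewrite size_takel // ss.
move=> p q; rewrite !inE => Hp Hq.
have : q \in drop i s.
  have : q \in s by rewrite (perm_mem ps) mem_enum.
  by rewrite -{1}(cat_take_drop i s) mem_cat (negbTE Hq).
move: pw; rewrite -{1}(cat_take_drop i s) pairwise_cat => /and3P [H _ _] Hq'.
by move/allrelP: H; apply.
Qed.

From mathcomp Require Import zify.

Theorem mainTheorem5 (n : nat) (d : Order.disp_t) (Vin : orderType d)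
    (S : {set graph n}) :
  S != set0 ->
  (forall G, G \in S -> has_loops G) ->
  forall i : nat, 1 <= i < eqdom S ->
    kset_solvable_1round Vin (closed_above_model (SymG S)) (i + (n - cov i S)).
Proof.
move=> S0 loops i /andP [i1 iE].
have iN : i <= n.
  apply: leq_trans (ltnW iE) _; apply/bigmax_leqP => G _.
  exact: bigmin_leqx.
exists Vin, (fun _ x => x), (fun p x rcv => fmin rcv x (enum 'I_n)).
move=> sigma Hsig inp rcv decision.
have Hin : forall p, exists q, decision p = inp q.
  move=> p; case: (fmin_in (rcv p) (inp p) (enum 'I_n)) => [E|[q E]].
    by exists p.
  exists q; move: E; rewrite /decision /rcv; case: ifP => // _ [] ->; by [].
split; first exact: Hin.
have [P [cP HP]] := exP inp iN.
have [G' /bigcupP [pi _ /imsetP [G GS ->]]] := Hsig 0%N.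
rewrite inE => sub.
set G1 := sigma 0%N in sub rcv decision Hin *.
pose O := OutS G1 P.
have Hdec : forall y, y \in O -> decision y \in [seq inp p | p in P].
  move=> y /bigcupP [p Pp]; rewrite inE => Hpy.
  have Hr : rcv y p = Some (inp p) by rewrite /rcv inE Hpy.
  have Hle : (decision y <= inp p)%O by apply: (fmin_le _ _ Hr); rewrite mem_enum.
  have [q Eq] := Hin y.
  case: (boolP (q \in P)) => Hq; first by rewrite Eq; apply: image_f.
  have Hge := HP p q Pp Hq.
  have -> : decision y = inp p by apply/le_anti; rewrite Hle Eq -Eq Eq Hge.
  exact: image_f.
have cardO : cov i S <= #|O|.
  pose P' := (pi^-1)%g @: P.
  have cP' : #|P'| = i by rewrite card_imset //; apply: perm_inj.
  apply: (@leq_trans (covG i G)).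
    by apply: bigmin_leq => //; rewrite mem_index_enum.
  apply: (@leq_trans #|OutS G P'|).
    by apply: bigmin_leq; rewrite ?mem_index_enum //= cP'.
  rewrite -(card_imset _ (@perm_inj _ pi)).
  apply: subset_leq_card; apply/subsetP => y /imsetP [z /bigcupP [p' Hp' Hz] ->].
  move: Hp' => /imsetP [p Pp Ep'].
  apply/bigcupP; exists p => //; rewrite inE.
  move: Hz; rewrite inE => Hz.
  apply: (subsetP sub); apply/imsetP; exists (p', z) => //=.
  by rewrite Ep' permKV.
apply: (@leq_trans (size ([seq inp p | p in P] ++ [seq decision p | p in ~: O]))).
  apply: uniq_leq_size; first exact: undup_uniq.
  move=> x; rewrite mem_undup => /mapP [p _ ->].
  rewrite mem_cat; case: (boolP (p \in O)) => Hp; first by rewrite Hdec.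
  by rewrite image_f ?orbT // inE.
rewrite size_cat !size_image cP.
have := cardsC O; rewrite card_ord => HC.
move: HC cardO; set a := #|~: O|; set b := #|O|; set c := cov i S; clear; lia.
Qed.
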